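(* Let $A_o,A_i\in\mathbb R^{n_y\times n_x}$, let $B_o,B_i\in\mathbb R^{n_y\times n_y}$ and $C_o,C_i\in\mathbb R^{n_x\times n_x}$ be invertible. If the inclusion $y\in\{(A_o+B_o\Delta C_o)x:\|\Delta\|\le1\}$ contains the inclusion $y\in\{(A_i+B_i\Delta C_i)x:\|\Delta\|\le1\}$, then $\sigma_{\max}(\tilde B)\,\sigma_{\max}(\tilde C)\le1$, where $\tilde B=B_o^{-1}B_i$ and $\tilde C=C_iC_o^{-1}$.
   Context: $\|\cdot\|$ is the spectral norm and $\sigma_{\max}$ denotes the largest singular value. An inclusion contains another if every pair $(x,y)\in\mathbb C^{n_x}\times\mathbb C^{n_y}$ satisfying the second also satisfies the first. *)

(* Defs.v *)
From HB Require Import structures.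
From mathcomp Require Import all_boot all_order all_algebra.
From mathcomp Require Import complex.
From mathcomp Require Import boolp classical_sets reals.
Set Implicit Arguments. Unset Strict Implicit. Unset Printing Implicit Defensive.
Import Order.TTheory GRing.Theory Num.Theory.
Local Open Scope ring_scope.
Local Open Scope classical_set_scope.

Definition cnorm2 (R : realType) (n : nat) (v : 'cV[R[i]]_n) : R :=
  \sum_(k < n) (complex.Re (v k 0) ^+ 2 + complex.Im (v k 0) ^+ 2).

Definition rnorm2 (R : realType) (n : nat) (v : 'cV[R]_n) : R :=
  \sum_(k < n) v k 0 ^+ 2.

Definition specnormC (R : realType) (m n : nat) (M : 'M[R[i]]_(m, n)) : R :=
  sup [set Num.sqrt (cnorm2 (M *m v)) | v in [set v : 'cV[R[i]]_n | cnorm2 v = 1]].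

Definition sigma_max (R : realType) (m n : nat) (M : 'M[R]_(m, n)) : R :=
  sup [set Num.sqrt (rnorm2 (M *m v)) | v in [set v : 'cV[R]_n | rnorm2 v = 1]].

Definition cmx (R : realType) (m n : nat) (M : 'M[R]_(m, n)) : 'M[R[i]]_(m, n) :=
  map_mx (fun r : R => r%:C%C) M.

Definition inclusion (R : realType) (nx ny : nat)
  (A : 'M[R]_(ny, nx)) (B : 'M[R]_ny) (C : 'M[R]_nx)
  (x : 'cV[R[i]]_nx) (y : 'cV[R[i]]_ny) : Prop :=
  exists D : 'M[R[i]]_(ny, nx),
    specnormC D <= 1 /\ y = (cmx A + cmx B *m D *m cmx C) *m x.

(* Main.v *)
Require Import Defs.
From HB Require Import structures.
From mathcomp Require Import all_boot all_order all_algebra.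
From mathcomp Require Import complex.
From mathcomp Require Import boolp classical_sets reals.
From mathcomp Require Import ring lra.
Import Order.TTheory GRing.Theory Num.Theory.
Set Implicit Arguments. Unset Strict Implicit. Unset Printing Implicit Defensive.
Local Open Scope ring_scope.

Lemma CS (R : realType) n (a b : 'I_n -> R) :
  (\sum_k a k * b k)^+2 <= (\sum_k a k ^+2) * (\sum_k b k ^+2).
Proof.
have H : 0 <= \sum_k \sum_l (a k * b l - a l * b k)^+2.
  by apply: sumr_ge0 => k _; apply: sumr_ge0 => l _; exact: sqr_ge0.
have E1 : (\sum_k a k ^+2) * (\sum_k b k ^+2) = \sum_k \sum_l (a k ^+2 * b l ^+2).
  rewrite mulr_suml; apply: eq_bigr => k _; by rewrite mulr_sumr.
have E2 : (\sum_k a k ^+2) * (\sum_k b k ^+2) = \sum_k \sum_l (a l ^+2 * b k ^+2).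
  rewrite mulrC mulr_suml; apply: eq_bigr => k _; rewrite mulr_sumr.
  by apply: eq_bigr => l _; rewrite mulrC.
have E3 : 2 * (\sum_k a k * b k)^+2 = \sum_k \sum_l (2 * (a k * b k * (a l * b l))).
  rewrite expr2 mulr_suml mulr_sumr; apply: eq_bigr => k _; by rewrite mulr_sumr mulr_sumr.
have E : \sum_k \sum_l (a k * b l - a l * b k)^+2 =
   (\sum_k a k ^+2) * (\sum_k b k ^+2) + (\sum_k a k ^+2) * (\sum_k b k ^+2)
    - 2 * (\sum_k a k * b k)^+2.
  rewrite E3 {1}E1 E2 -big_split -sumrB.
  apply: eq_bigr => k _; rewrite -big_split -sumrB; apply: eq_bigr => l _ /=.
  ring.
move: H; rewrite E; lra.
Qed.

Definition reM (R : realType) m n (M : 'M[R[i]]_(m, n)) : 'M[R]_(m, n) :=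
  map_mx (@complex.Re R) M.
Definition imM (R : realType) m n (M : 'M[R[i]]_(m, n)) : 'M[R]_(m, n) :=
  map_mx (@complex.Im R) M.

Lemma cnorm2E (R : realType) n (v : 'cV[R[i]]_n) :
  cnorm2 v = rnorm2 (reM v) + rnorm2 (imM v).
Proof. by rewrite /cnorm2 /rnorm2 -big_split; apply: eq_bigr => k _; rewrite !mxE. Qed.

Lemma Re_sum (R : realType) n (F : 'I_n -> R[i]) :
  complex.Re (\sum_k F k) = \sum_k complex.Re (F k).
Proof.
elim/big_rec2: _ => // k y1 y2 _ <-; by case: (F k); case: y2.
Qed.

Lemma Im_sum (R : realType) n (F : 'I_n -> R[i]) :
  complex.Im (\sum_k F k) = \sum_k complex.Im (F k).
Proof.
elim/big_rec2: _ => // k y1 y2 _ <-; by case: (F k); case: y2.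
Qed.

Lemma reM_mul (R : realType) m n p (A : 'M[R[i]]_(m, n)) (B : 'M[R[i]]_(n, p)) :
  reM (A *m B) = reM A *m reM B - imM A *m imM B.
Proof.
apply/matrixP => i j; rewrite !mxE Re_sum -sumrB; apply: eq_bigr => k _.
by rewrite !mxE; case: (A i k); case: (B k j).
Qed.

Lemma imM_mul (R : realType) m n p (A : 'M[R[i]]_(m, n)) (B : 'M[R[i]]_(n, p)) :
  imM (A *m B) = reM A *m imM B + imM A *m reM B.
Proof.
apply/matrixP => i j; rewrite !mxE Im_sum -big_split; apply: eq_bigr => k _.
by rewrite !mxE; case: (A i k); case: (B k j) => * /=; ring.
Qed.

Lemma reM_cmx (R : realType) m n (M : 'M[R]_(m, n)) : reM (cmx M) = M.
Proof. by apply/matrixP => i j; rewrite !mxE. Qed.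

Lemma imM_cmx (R : realType) m n (M : 'M[R]_(m, n)) : imM (cmx M) = 0.
Proof. by apply/matrixP => i j; rewrite !mxE. Qed.

Lemma rnorm2_ge0 (R : realType) n (v : 'cV[R]_n) : 0 <= rnorm2 v.
Proof. by apply: sumr_ge0 => k _; exact: sqr_ge0. Qed.

Lemma sq2 (R : realType) (x y : R) : (x + y)^+2 <= 2 * x^+2 + 2 * y^+2.
Proof. have := sqr_ge0 (x - y); nra. Qed.
Lemma sq2m (R : realType) (x y : R) : (x - y)^+2 <= 2 * x^+2 + 2 * y^+2.
Proof. have := sqr_ge0 (x + y); nra. Qed.

Lemma rnorm2D (R : realType) n (a b : 'cV[R]_n) :
  rnorm2 (a + b) <= 2 * rnorm2 a + 2 * rnorm2 b.
Proof.
rewrite /rnorm2 !mulr_sumr -big_split; apply: ler_sum => k _; rewrite !mxE.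
exact: sq2.
Qed.

Lemma rnorm2B (R : realType) n (a b : 'cV[R]_n) :
  rnorm2 (a - b) <= 2 * rnorm2 a + 2 * rnorm2 b.
Proof.
rewrite /rnorm2 !mulr_sumr -big_split; apply: ler_sum => k _; rewrite !mxE.
exact: sq2m.
Qed.

Lemma rnorm2Z (R : realType) n (c : R) (a : 'cV[R]_n) :
  rnorm2 (c *: a) = c ^+ 2 * rnorm2 a.
Proof. rewrite /rnorm2 mulr_sumr; apply: eq_bigr => k _; rewrite !mxE; ring. Qed.

Definition frob (R : realType) m n (M : 'M[R]_(m, n)) : R :=
  \sum_i \sum_j M i j ^+ 2.

Lemma frob_bound (R : realType) m n (M : 'M[R]_(m, n)) (a : 'cV[R]_n) :
  rnorm2 (M *m a) <= frob M * rnorm2 a.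
Proof.
rewrite /rnorm2 /frob mulr_suml; apply: ler_sum => i _; rewrite !mxE.
exact: (CS (fun j => M i j) (fun j => a j 0)).
Qed.

Lemma cmxM (R : realType) m n p (A : 'M[R]_(m, n)) (B : 'M[R]_(n, p)) :
  cmx (A *m B) = cmx A *m cmx B.
Proof. exact: map_mxM. Qed.
Lemma cmxD (R : realType) m n (A B : 'M[R]_(m, n)) : cmx (A + B) = cmx A + cmx B.
Proof. exact: map_mxD. Qed.
Lemma cmxN (R : realType) m n (A : 'M[R]_(m, n)) : cmx (- A) = - cmx A.
Proof. exact: map_mxN. Qed.
Lemma cmx1 (R : realType) n : cmx (1%:M : 'M[R]_n) = 1%:M.
Proof. exact: map_mx1. Qed.
Lemma cmxZ (R : realType) m n (c : R) (A : 'M[R]_(m, n)) : cmx (c *: A) = (c%:C)%C *: cmx A.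
Proof. by apply/matrixP => i j; rewrite !mxE rmorphM. Qed.

Lemma cnorm2_cmx (R : realType) n (v : 'cV[R]_n) : cnorm2 (cmx v) = rnorm2 v.
Proof.
rewrite cnorm2E reM_cmx imM_cmx.
have -> : rnorm2 (0 : 'cV[R]_n) = 0 by rewrite /rnorm2 big1 // => k _; rewrite mxE expr0n.
by rewrite addr0.
Qed.

Lemma cnorm2_ge0 (R : realType) n (v : 'cV[R[i]]_n) : 0 <= cnorm2 v.
Proof. by rewrite cnorm2E addr_ge0 // rnorm2_ge0. Qed.

Lemma cbound (R : realType) m n (D : 'M[R[i]]_(m, n)) :
  exists K, forall v, cnorm2 v = 1 -> cnorm2 (D *m v) <= K.
Proof.
exists (2 * (frob (reM D) + frob (imM D))) => v v1.
rewrite cnorm2E reM_mul imM_mul.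
move: v1; rewrite cnorm2E => v1.
have h1 := rnorm2B (reM D *m reM v) (imM D *m imM v).
have h2 := rnorm2D (reM D *m imM v) (imM D *m reM v).
have f1 := frob_bound (reM D) (reM v).
have f2 := frob_bound (reM D) (imM v).
have f3 := frob_bound (imM D) (reM v).
have f4 := frob_bound (imM D) (imM v).
nra.
Qed.

Local Open Scope classical_set_scope.
Lemma sup_le (R : realType) (E : set R) (c : R) : 0 <= c ->
  (forall x, E x -> x <= c) -> sup E <= c.
Proof.
move=> c0 H; case: (pselect (E !=set0)) => [ne|e]; first exact: ge_sup.
have -> : E = set0.
  by apply/funext => x; apply/propext; split => // Ex; apply: e; exists x.
by rewrite sup0.
Qed.

Lemma sup_ge0 (R : realType) (E : set R) :
  (forall x, E x -> 0 <= x) -> 0 <= sup E.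
Proof.
move=> H; case: (pselect (has_sup E)) => [hs|nhs]; last by rewrite sup_out.
case: (hs) => [[x Ex] _]; apply: le_trans (H x Ex) _.
exact: sup_upper_bound.
Qed.

Lemma sqrt_le1 (R : realType) (x : R) : 0 <= x -> Num.sqrt x <= 1 -> x <= 1.
Proof. by move=> x0; rewrite -{1}sqrtr1 ler_sqrt. Qed.
Lemma le1_sqrt (R : realType) (x : R) : x <= 1 -> Num.sqrt x <= 1.
Proof. by move=> h; rewrite -sqrtr1 ler_wsqrtr. Qed.

Lemma specC_le (R : realType) m n (D : 'M[R[i]]_(m, n)) (v : 'cV[R[i]]_n) :
  specnormC D <= 1 -> cnorm2 v = 1 -> cnorm2 (D *m v) <= 1.
Proof.
move=> hD v1; apply: sqrt_le1; first exact: cnorm2_ge0.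
apply: le_trans hD; apply: sup_upper_bound; last by exists v.
split; first by exists (Num.sqrt (cnorm2 (D *m v))), v.
have [K HK] := cbound D.
exists (Num.sqrt K) => _ [w w1 <-]; apply: ler_wsqrtr; exact: HK.
Qed.

Lemma specC_cmx (R : realType) m n (M : 'M[R]_(m, n)) :
  (forall a, rnorm2 (M *m a) <= rnorm2 a) -> specnormC (cmx M) <= 1.
Proof.
move=> HM; apply: sup_le => // _ [v v1 <-]; apply: le1_sqrt.
rewrite -v1 !cnorm2E reM_mul imM_mul reM_cmx imM_cmx !mul0mx subr0 addr0.
by apply: lerD; apply: HM.
Qed.

Lemma sup_prod (R : realType) (SB SC : set R) :
  (forall b, SB b -> 0 <= b) -> (forall c, SC c -> 0 <= c) ->
  (forall b c, SB b -> SC c -> b * c <= 1) -> sup SB * sup SC <= 1.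
Proof.
move=> HB HC H.
have b0 := sup_ge0 HB; have c0 := sup_ge0 HC.
have [->|bpos] := eqVneq (sup SB) 0; first by rewrite mul0r.
have {bpos}bpos : 0 < sup SB by rewrite lt_def bpos.
have hsB : has_sup SB.
  by apply: contrapT => /sup_out h; move: bpos; rewrite h ltxx.
have Hc : forall c, SC c -> c <= (sup SB)^-1.
  move=> c Sc; have := HC c Sc; rewrite le_eqVlt => /orP [/eqP <-|cpos].
    by rewrite invr_ge0 ltW.
  have : sup SB <= c^-1.
    apply: ge_sup; first by case: hsB.
    by move=> b Sb; rewrite -(ler_pM2r cpos) mulVf ?gt_eqF //; exact: H.
  move=> h; rewrite -(ler_pM2r bpos) mulVf ?gt_eqF //; rewrite -(ler_pM2r cpos) mulVf ?gt_eqF // in h; by rewrite mulrC.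
have : sup SC <= (sup SB)^-1 by apply: sup_le => //; rewrite invr_ge0 ltW.
by rewrite -(ler_pM2l bpos) mulfV ?gt_eqF.
Qed.

Lemma rank1_apply (R : realType) m n (w : 'cV[R]_m) (u a : 'cV[R]_n) :
  w *m u^T *m a = (\sum_k u k 0 * a k 0) *: w.
Proof.
apply/matrixP => i j; rewrite -mulmxA !mxE big_ord1 !mxE (ord1 j) mulrC.
by congr (_ * _); apply: eq_bigr => k _; rewrite !mxE.
Qed.

Lemma rank1_norm (R : realType) m n (w : 'cV[R]_m) (u : 'cV[R]_n) :
  rnorm2 w = 1 -> 0 < rnorm2 u ->
  forall a, rnorm2 ((Num.sqrt (rnorm2 u))^-1 *: (w *m u^T) *m a) <= rnorm2 a.
Proof.
move=> w1 upos a; rewrite -scalemxAl rank1_apply scalerA rnorm2Z w1 mulr1.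
rewrite exprMn exprVn (sqr_sqrtr (ltW upos)) mulrC ler_pdivrMr //.
rewrite mulrC; have := CS (fun k => u k 0) (fun k => a k 0).
by rewrite /rnorm2.
Qed.

Lemma rank1_u (R : realType) m n (w : 'cV[R]_m) (u : 'cV[R]_n) :
  0 < rnorm2 u ->
  (Num.sqrt (rnorm2 u))^-1 *: (w *m u^T) *m u = Num.sqrt (rnorm2 u) *: w.
Proof.
move=> upos; rewrite -scalemxAl rank1_apply scalerA.
have -> : \sum_k u k 0 * u k 0 = rnorm2 u by apply: eq_bigr => k _; rewrite expr2.
congr (_ *: _); rewrite -{2}(sqr_sqrtr (ltW upos)) expr2 mulrA mulVf ?mul1r //.
by rewrite sqrtr_eq0 -ltNge.
Qed.

Lemma diff_helper (K : comNzRingType) p q r s (A : 'M[K]_(p, r)) (B : 'M[K]_p)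
   (D1 D2 : 'M[K]_(p, q)) (C : 'M[K]_(q, r)) (x : 'M[K]_(r, s)) :
  (A + B *m D1 *m C) *m x - (A + B *m D2 *m C) *m x = B *m ((D1 - D2) *m (C *m x)).
Proof.
rewrite -mulmxBl opprD addrACA subrr add0r -mulmxBl -mulmxBr !mulmxA.
done.
Qed.

Lemma reMB (R : realType) m n (A B : 'M[R[i]]_(m, n)) : reM (A - B) = reM A - reM B.
Proof. by apply/matrixP => i j; rewrite !mxE; case: (A i j); case: (B i j). Qed.
Lemma imMB (R : realType) m n (A B : 'M[R[i]]_(m, n)) : imM (A - B) = imM A - imM B.
Proof. by apply/matrixP => i j; rewrite !mxE; case: (A i j); case: (B i j). Qed.

Lemma cnorm2B (R : realType) n (a b : 'cV[R[i]]_n) :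
  cnorm2 (a - b) <= 2 * cnorm2 a + 2 * cnorm2 b.
Proof.
rewrite !cnorm2E reMB imMB.
have := rnorm2B (reM a) (reM b); have := rnorm2B (imM a) (imM b); lra.
Qed.

Lemma final_arith (R : realType) (t a b s : R) : 0 <= t -> a <= 1 -> b <= 1 ->
  2 ^+ 2 * s ^+ 2 * t <= 2 * a + 2 * b -> t * s ^+ 2 <= 1.
Proof.
move=> ht ha hb H.
have -> : t * s ^+ 2 = (2 ^+ 2 * s ^+ 2 * t) / 4 by field.
rewrite ler_pdivrMr //; lra.
Qed.

Local Close Scope classical_set_scope.
Theorem lemma2 (R : realType) (nx ny : nat)
  (Ao Ai : 'M[R]_(ny, nx)) (Bo Bi : 'M[R]_ny) (Co Ci : 'M[R]_nx) :
  Bo \in unitmx -> Bi \in unitmx -> Co \in unitmx -> Ci \in unitmx ->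
  (forall x y, inclusion Ai Bi Ci x y -> inclusion Ao Bo Co x y) ->
  sigma_max (invmx Bo *m Bi) * sigma_max (Ci *m invmx Co) <= 1.
Proof.
move=> uBo uBi uCo uCi Hinc.
apply: sup_prod.
- by move=> _ [v _ <-]; exact: sqrtr_ge0.
- by move=> _ [v _ <-]; exact: sqrtr_ge0.
move=> _ _ [w w1 <-] [z z1 <-].
rewrite -sqrtrM ?rnorm2_ge0 //; apply: le1_sqrt.
set u := Ci *m invmx Co *m z.
have [u0|upos] : rnorm2 u = 0 \/ 0 < rnorm2 u.
  by have := rnorm2_ge0 u; rewrite le_eqVlt => /orP [/eqP <-|->]; [left|right].
  by rewrite u0 mulr0 ler01.
set s := Num.sqrt (rnorm2 u).
have spos : 0 < s by rewrite sqrtr_gt0.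
have s2 : s ^+ 2 = rnorm2 u by rewrite sqr_sqrtr // ltW.
set M1 := s^-1 *: (w *m u^T).
set M2 := s^-1 *: ((- w) *m u^T).
have w1' : rnorm2 (- w) = 1.
  by rewrite -w1 -scaleN1r rnorm2Z sqrrN expr1n mul1r.
have sM1 : specnormC (cmx M1) <= 1 by apply: specC_cmx; exact: rank1_norm.
have sM2 : specnormC (cmx M2) <= 1 by apply: specC_cmx; exact: rank1_norm.
set x := invmx Co *m z.
have hx : Ci *m x = u by rewrite /x /u mulmxA.
have hz : Co *m x = z by rewrite /x mulmxA mulmxV // mul1mx.
have [D1 [hD1 e1]] := Hinc (cmx x) _ (ex_intro _ (cmx M1) (conj sM1 erefl)).
have [D2 [hD2 e2]] := Hinc (cmx x) _ (ex_intro _ (cmx M2) (conj sM2 erefl)).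
have E := congr2 (fun a b => a - b) e1 e2; simpl in E.
rewrite !diff_helper -!cmxM hx hz -cmxN -cmxD -cmxM -cmxM in E.
rewrite mulmxBl rank1_u // rank1_u // in E.
have E2 : (D1 - D2) *m cmx z = cmx ((2 * s) *: (invmx Bo *m Bi *m w)).
  have -> : (D1 - D2) *m cmx z = cmx (invmx Bo) *m (cmx Bo *m ((D1 - D2) *m cmx z)).
    by rewrite mulmxA -cmxM mulVmx // cmx1 mul1mx.
  rewrite -E -!cmxM; congr cmx.
  rewrite scalerN opprK -scalerDl -!mulmxA !scalemxAr -/s.
  have -> : s + s = 2 * s by ring.
  done.
have c1 : cnorm2 (cmx z) = 1 by rewrite cnorm2_cmx; exact: z1.
have h1 := specC_le hD1 c1; have h2 := specC_le hD2 c1.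
have := cnorm2B (D1 *m cmx z) (D2 *m cmx z).
rewrite -mulmxBl E2 cnorm2_cmx rnorm2Z -s2 exprMn => H.
exact: (final_arith (rnorm2_ge0 _) h1 h2 H).
Qed.
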